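(* Let $\alpha\colon\mathsf{Ring}\to\mathsf{CommRing}$ be a functor whose restriction to $\mathsf{CommRing}$ is isomorphic to the identity functor of $\mathsf{CommRing}$. Then for every ring $R$ admitting a ring homomorphism $\mathbb{C}\to R$ and every $n\geq 3$, one has $\alpha(\mathrm{M}_n(R))=0$. In particular, $\alpha$ is not faithful.
   Context: Rings are unital and ring homomorphisms preserve the identity; $\mathsf{Ring}$ and $\mathsf{CommRing}$ denote the categories of rings and of commutative rings. $\mathrm{M}_n(R)$ is the ring of $n\times n$ matrices over $R$. *)

(* Defs.v *)
From HB Require Import structures.
From mathcomp Require Import all_boot all_order all_algebra.
From mathcomp Require Import reals Rstruct complex.
Set Implicit Arguments. Unset Strict Implicit. Unset Printing Implicit Defensive.
Import GRing.Theory.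
Local Open Scope ring_scope.

(* Ring = category of (possibly zero) unital rings: pzRingType, morphisms
   {rmorphism A -> B} (unital ring homomorphisms).
   CommRing = comPzRingType, with the same morphisms.
   Equality of morphisms is pointwise equality of the underlying maps. *)

Definition CC : comPzRingType := (complex Rdefinitions.R : fieldType).

Record functor_Ring_CommRing := FunctorRC {
  Fobj :> pzRingType -> comPzRingType;
  Fmor : forall (A B : pzRingType), {rmorphism A -> B} -> {rmorphism Fobj A -> Fobj B};
  Fmor_id : forall (A : pzRingType) (f : {rmorphism A -> A}),
      f =1 id -> Fmor f =1 id;
  Fmor_comp : forall (A B C : pzRingType) (f : {rmorphism A -> B})
      (g : {rmorphism B -> C}) (h : {rmorphism A -> C}),
      (forall x, h x = g (f x)) -> forall y, Fmor h y = Fmor g (Fmor f y)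
}.

Definition restr_iso_id (F : functor_Ring_CommRing) : Prop :=
  exists (eta : forall A : comPzRingType, {rmorphism F A -> A})
         (theta : forall A : comPzRingType, {rmorphism A -> F A}),
    (forall A : comPzRingType, cancel (eta A) (theta A) /\ cancel (theta A) (eta A)) /\
    (forall (A B : comPzRingType) (f : {rmorphism A -> B}),
        forall x, eta B (Fmor F f x) = f (eta A x)).

Definition faithful (F : functor_Ring_CommRing) : Prop :=
  forall (A B : pzRingType) (f g : {rmorphism A -> B}),
    Fmor F f =1 Fmor F g -> f =1 g.

(* Main.v *)
Require Import Defs.
From HB Require Import structures.
From mathcomp Require Import all_boot all_order all_algebra.
From mathcomp Require Import ring.
From mathcomp Require Import reals Rstruct complex.
Set Implicit Arguments. Unset Strict Implicit. Unset Printing Implicit Defensive.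
Import GRing.Theory Num.Theory.
Local Open Scope ring_scope.

Definition A4 : comPzRingType := ((int * int) * (int * int))%type.

Definition coord (i : nat) (x : A4) : int :=
  match i with 0 => x.1.1 | 1 => x.1.2 | 2 => x.2.1 | _ => x.2.2 end.

Lemma coordD i x y : coord i (x + y) = coord i x + coord i y.
Proof. by case: i => [|[|[|i]]]. Qed.
Lemma coordM i x y : coord i (x * y) = coord i x * coord i y.
Proof. by case: i => [|[|[|i]]]. Qed.
Lemma coord1 i : coord i 1 = 1.
Proof. by case: i => [|[|[|i]]]. Qed.
Lemma coord0 i : coord i 0 = 0.
Proof. by case: i => [|[|[|i]]]. Qed.
Lemma coordN i x : coord i (- x) = - coord i x.
Proof. by case: i => [|[|[|i]]]. Qed.

Definition fam4 (M : pzRingType) (P : nat -> M) :=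
  (forall i j, (i < 4)%N -> (j < 4)%N -> P i * P j = if i == j then P i else 0) /\
  \sum_(i < 4) P i = 1.

Section Fam.
Variables (M : pzRingType) (P : nat -> M) (hP : fam4 P).
Definition Hf (x : A4) : M := \sum_(i < 4) P i *~ coord i x.

Lemma Hf_zmod : zmod_morphism Hf.
Proof.
move=> x y; rewrite /Hf -sumrB; apply: eq_bigr => i _.
by rewrite coordD coordN mulrzDr mulrNz.
Qed.

Lemma Hf_mon : monoid_morphism Hf.
Proof.
split.
  by rewrite /Hf -hP.2; apply: eq_bigr => i _; rewrite coord1.
move=> x y; rewrite /Hf mulr_suml; apply: eq_bigr => i _.
rewrite mulr_sumr (bigD1 i) //= big1 ?addr0.
  by case: hP => h1 _; rewrite mulrzAl mulrzAr h1 // eqxx coordM -mulrzA mulrC.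
move=> j ij; case: hP => h1 _; rewrite mulrzAl mulrzAr h1 //.
by rewrite ifN ?mul0rz // eq_sym.
Qed.

HB.instance Definition _ := GRing.isZmodMorphism.Build A4 M Hf Hf_zmod.
HB.instance Definition _ := GRing.isMonoidMorphism.Build A4 M Hf Hf_mon.

Definition Hm : {rmorphism A4 -> M} := Hf.
End Fam.

Definition P4 (M : pzRingType) (A B C : M) : nat -> M :=
  fun i => match i with 0 => A | 1 => B | 2 => C | _ => 1 - (A + B + C) end.

Definition orth3 (M : pzRingType) (A B C : M) :=
  [/\ A * A = A, B * B = B, C * C = C,
      [/\ A * B = 0, B * A = 0, A * C = 0 & C * A = 0] & B * C = 0 /\ C * B = 0].

Lemma fam_of (M : pzRingType) (A B C : M) : orth3 A B C -> fam4 (P4 A B C).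
Proof.
case=> hA hB hC [hAB hBA hAC hCA] [hBC hCB]; split; last first.
  by rewrite !big_ord_recr big_ord0 /= add0r addrC subrK.
set S := A + B + C.
have hS : S * S = S.
  by rewrite /S !mulrDl !mulrDr hA hB hC hAB hBA hAC hCA hBC hCB !addr0 !add0r.
have hSA : S * A = A by rewrite /S !mulrDl hA hBA hCA !addr0.
have hAS : A * S = A by rewrite /S !mulrDr hA hAB hAC !addr0.
have hSB : S * B = B by rewrite /S !mulrDl hB hAB hCB addr0 add0r.
have hBS : B * S = B by rewrite /S !mulrDr hB hBA hBC addr0 add0r.
have hSC : S * C = C by rewrite /S !mulrDl hC hAC hBC !add0r.
have hCS : C * S = C by rewrite /S !mulrDr hC hCA hCB !add0r.
have hD : (1 - S) * (1 - S) = 1 - S.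
  by rewrite !mulrBl !mulrBr !mul1r !mulr1 hS subrr subr0.
move=> i j; case: i => [|[|[|[|i]]]] //; case: j => [|[|[|[|j]]]] //= _ _;
  rewrite ?mulrBl ?mulrBr ?mul1r ?mulr1 ?hA ?hB ?hC ?hAB ?hBA ?hAC ?hCA ?hBC ?hCB
    ?hSA ?hAS ?hSB ?hBS ?hSC ?hCS ?hS ?subrr ?subr0 //.
Qed.

Section Func.
Variable F : functor_Ring_CommRing.
Variable theta : forall A : comPzRingType, {rmorphism A -> F A}.
Hypothesis thnat : forall (A B : comPzRingType) (f : {rmorphism A -> B}) x,
  Fmor F f (theta A x) = theta B (f x).

Definition phiF (M : pzRingType) (A : comPzRingType) (f : {rmorphism A -> M}) (a : A)
  : F M := Fmor F f (theta A a).

Lemma phiF_nat (M : pzRingType) (A A' : comPzRingType) (u : {rmorphism A' -> A})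
  (f : {rmorphism A -> M}) (g : {rmorphism A' -> M}) :
  (forall x, g x = f (u x)) -> forall y, phiF g y = phiF f (u y).
Proof. by move=> h y; rewrite /phiF (Fmor_comp h) thnat. Qed.

Lemma phiF1 (M : pzRingType) (A : comPzRingType) (f : {rmorphism A -> M}) : phiF f 1 = 1.
Proof. by rewrite /phiF !rmorph1. Qed.
Lemma phiF0 (M : pzRingType) (A : comPzRingType) (f : {rmorphism A -> M}) : phiF f 0 = 0.
Proof. by rewrite /phiF !rmorph0. Qed.
Lemma phiFD (M : pzRingType) (A : comPzRingType) (f : {rmorphism A -> M}) x y : phiF f (x + y) = phiF f x + phiF f y.
Proof. by rewrite /phiF !rmorphD. Qed.
Lemma phiFM (M : pzRingType) (A : comPzRingType) (f : {rmorphism A -> M}) x y : phiF f (x * y) = phiF f x * phiF f y.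
Proof. by rewrite /phiF !rmorphM. Qed.

Definition idem (M : pzRingType) (P : M) := if P * P == P then P else 0.
Lemma idemE (M : pzRingType) (P : M) : P * P = P -> idem P = P.
Proof. by rewrite /idem => ->; rewrite eqxx. Qed.
Lemma idem_idem (M : pzRingType) (P : M) : idem P * idem P = idem P.
Proof. by rewrite /idem; case: eqP => // _; rewrite mulr0. Qed.

Lemma orth_idem (M : pzRingType) (P : M) : orth3 (idem P) 0 0.
Proof. by split; rewrite ?idem_idem ?mulr0 ?mul0r. Qed.

Definition eps1 : A4 := ((1, 0), (0, 0)).

Definition ee (M : pzRingType) (P : M) : F M :=
  phiF (Hm (fam_of (orth_idem P))) eps1.

Definition epsv (i : nat) : A4 :=
  (((i == 0%N)%:R, (i == 1%N)%:R), ((i == 2%N)%:R, (i == 3%N)%:R)).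

Lemma Hm_eps (M : pzRingType) (P : nat -> M) (hP : fam4 P) i : (i < 4)%N ->
  Hm hP (epsv i) = P i.
Proof.
rewrite /= /Hf => hi; rewrite (bigD1 (Ordinal hi)) //= big1 ?addr0.
  by case: i hi => [|[|[|[|i]]]].
move=> j; rewrite -val_eqE /= => ji.
by case: j ji => [[|[|[|[|j]]]] //] /=; case: i hi => [|[|[|[|i]]]].
Qed.

Lemma orth_eps i : (i < 4)%N -> orth3 (epsv i) 0 0.
Proof.
by move=> hi; split; rewrite ?mulr0 ?mul0r //; case: i hi => [|[|[|[|i]]]].
Qed.

Lemma Hm_P4 (M : pzRingType) (A B C : M) (h : orth3 A B C) x :
  Hm (fam_of h) x = A *~ x.1.1 + B *~ x.1.2 + C *~ x.2.1 + (1 - (A + B + C)) *~ x.2.2.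
Proof. rewrite /= /Hf !big_ord_recr big_ord0 /=. rewrite add0r. done. Qed.

Lemma rm_gen (A M : pzRingType) (f : {rmorphism A -> M}) (a : A) (m n : int) :
  f (a *~ m + (1 - a) *~ n) = f a *~ m + (1 - f a) *~ n.
Proof. by rewrite rmorphD !rmorphMz rmorphB rmorph1. Qed.

Lemma ee_fam (M : pzRingType) (P : nat -> M) (hP : fam4 P) i : (i < 4)%N ->
  ee (P i) = phiF (Hm hP) (epsv i).
Proof.
move=> hi; rewrite /ee.
have -> : epsv i = Hm (fam_of (orth_eps hi)) eps1.
  by rewrite Hm_P4 !mulr0z !addr0 mulr1z.
apply: phiF_nat => x.
rewrite !Hm_P4 !mul0rz !addr0 rm_gen (Hm_eps hP hi) idemE //.
by case: hP => h _; rewrite h // eqxx.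
Qed.

Lemma epsvM i j : (i < 4)%N -> (j < 4)%N -> i != j -> epsv i * epsv j = 0.
Proof. by case: i => [|[|[|[|i]]]] //; case: j => [|[|[|[|j]]]]. Qed.

Lemma epsv_sum : epsv 0 + epsv 1 + epsv 2 + epsv 3 = 1.
Proof. by []. Qed.

Lemma ee_sum (M : pzRingType) (P : nat -> M) (hP : fam4 P) :
  ee (P 0%N) + ee (P 1%N) + ee (P 2%N) + ee (P 3%N) = 1.
Proof. by rewrite !(ee_fam hP) // -!phiFD epsv_sum phiF1. Qed.

Lemma ee_orth (M : pzRingType) (P : nat -> M) (hP : fam4 P) i j :
  (i < 4)%N -> (j < 4)%N -> i != j -> ee (P i) * ee (P j) = 0.
Proof. by move=> hi hj hij; rewrite !(ee_fam hP) // -phiFM epsvM // phiF0. Qed.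

Lemma ee_idem (M : pzRingType) (P : M) : ee P * ee P = ee P.
Proof. by rewrite /ee -phiFM. Qed.
End Func.

Definition asg := nat -> option bool.
Definition upd (r : asg) v b : asg := fun i => if i == v then Some b else r i.

Definition viol (r : asg) (c : seq nat) : bool :=
  (1 < count (fun i => r i == Some true) c)%N || all (fun i => r i == Some false) c.

Fixpoint search (cls : seq (seq nat)) (o : seq nat) (r : asg) : bool :=
  if has (viol r) cls then true else
  match o with
  | [::] => false
  | v :: o' => search cls o' (upd r v true) && search cls o' (upd r v false)
  end.

Definition fviol (s : nat -> bool) (c : seq nat) : bool :=
  (1 < count s c)%N || all (fun i => ~~ s i) c.

Definition ext (s : nat -> bool) (r : asg) := forall i b, r i = Some b -> s i = b.

Lemma viol_ext s r c : ext s r -> viol r c -> fviol s c.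
Proof.
move=> hs /orP [h|h]; apply/orP; [left|right].
  apply: leq_trans h _; apply: sub_count => i /eqP /hs ->.
  done.
by apply/allP => i /(allP h) /eqP /hs ->.
Qed.

Lemma search_sound cls o : forall r, search cls o r ->
  forall s, ext s r -> has (fviol s) cls.
Proof.
elim: o => [|v o IH] r /=.
  case: ifP => // /hasP [c hc hv] _ s hs.
  by apply/hasP; exists c => //; apply: viol_ext hv.
case: ifP => [/hasP [c hc hv] _ s hs|_ /andP [h1 h2] s hs].
  by apply/hasP; exists c => //; apply: viol_ext hv.
have [hsv|hsv] := boolP (s v).
  apply: (IH _ h1 s) => i b; rewrite /upd; case: eqP => [->|_]; last exact: hs.
  by case=> <-.
apply: (IH _ h2 s) => i b; rewrite /upd; case: eqP => [->|_]; last exact: hs.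
by case=> <-; apply: negbTE.
Qed.

Lemma count2 (p : pred nat) c : uniq c -> (1 < count p c)%N ->
  exists i j, [/\ i \in c, j \in c, i != j, p i & p j].
Proof.
elim: c => //= a c IH /andP [ac uc].
case pa: (p a) => /= h.
  have : (0 < count p c)%N by [].
  rewrite -has_count => /hasP [j jc pj]; exists a, j; split => //.
    by rewrite inE eqxx.
    by rewrite inE jc orbT.
  by apply: contraNneq ac => ->.
have [i [j [ic jc ij pi pj]]] := IH uc h.
by exists i, j; split => //; rewrite inE ?ic ?jc orbT.
Qed.

Section Atoms.
Variables (T : comPzRingType) (m : nat) (x : nat -> T).
Hypothesis xid : forall i, x i * x i = x i.

Definition lit (b : bool) (y : T) := if b then y else 1 - y.
Definition atom (s : {ffun 'I_m -> bool}) := \prod_(i < m) lit (s i) (x i).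

Lemma lit_atom (s : {ffun 'I_m -> bool}) (k : 'I_m) : lit (s k) (x k) * atom s = atom s.
Proof.
rewrite /atom (bigD1 k) //= mulrA; congr (_ * _).
by case: (s k) => /=; rewrite ?xid // !mulrBl !mulrBr !mul1r ?mulr1 xid subrr subr0.
Qed.

Lemma x_atom_true (s : {ffun 'I_m -> bool}) (k : 'I_m) : s k -> x k * atom s = atom s.
Proof. by move=> h; have := lit_atom s k; rewrite h. Qed.

Lemma x_atom_false (s : {ffun 'I_m -> bool}) (k : 'I_m) : s k = false -> x k * atom s = 0.
Proof.
by move=> h; rewrite -(lit_atom s k) h /= mulrA mulrBr mulr1 xid subrr mul0r.
Qed.

Lemma sum_atoms : \sum_(s : {ffun 'I_m -> bool}) atom s = 1.
Proof.
rewrite /atom -(bigA_distr_bigA (fun (i : 'I_m) (b : bool) => lit b (x i))) /=.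
apply: big1 => i _.
by rewrite big_bool /= addrC subrK.
Qed.

Definition sn (s : {ffun 'I_m -> bool}) (i : nat) : bool :=
  if (insub i : option 'I_m) is Some k then s k else false.

Lemma snE (s : {ffun 'I_m -> bool}) i (h : (i < m)%N) : sn s i = s (Ordinal h).
Proof. by rewrite /sn insubT. Qed.

Variable cls : seq (seq nat).
Hypothesis hsum : forall c, c \in cls -> \sum_(i <- c) x i = 1.
Hypothesis horth : forall c, c \in cls -> forall i j, i \in c -> j \in c -> i != j ->
  x i * x j = 0.
Hypothesis hbound : all (all (fun i => (i < m)%N)) cls.
Hypothesis huniq : all uniq cls.

Lemma atom_zero (s : {ffun 'I_m -> bool}) : has (fviol (sn s)) cls -> atom s = 0.
Proof.
case/hasP => c hc /orP [h|h].
  have [i [j [ic jc ij pi pj]]] := count2 (allP huniq c hc) h.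
  have him : (i < m)%N by apply: (allP (allP hbound c hc)).
  have hjm : (j < m)%N by apply: (allP (allP hbound c hc)).
  move: pi pj; rewrite (snE s him) (snE s hjm) => pi pj.
  rewrite -(x_atom_true pi) -(x_atom_true pj) /= mulrA (horth hc) //.
  by rewrite mul0r.
rewrite -[atom s]mul1r -(hsum hc) mulr_suml big_seq big1 // => i ic.
have him : (i < m)%N by apply: (allP (allP hbound c hc)).
have := allP h i ic; rewrite (snE s him) => /negPf hf.
by rewrite -(x_atom_false hf).
Qed.

Variables (g : nat) (o : seq nat).
Hypothesis hg : (g < m)%N.
Hypothesis hsearch : search cls o (upd (fun _ => None) g true).

Lemma x_g_zero : x g = 0.
Proof.
rewrite -[x g]mulr1 -sum_atoms mulr_sumr big1 // => s _.
have [hs|hs] := boolP (s (Ordinal hg)).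
  rewrite atom_zero ?mulr0 //; apply: (search_sound hsearch) => i b.
  rewrite /upd; case: eqP => // -> ; case=> <-; by rewrite (snE s hg).
by rewrite -[g]/(nat_of_ord (Ordinal hg)) x_atom_false // (negbTE hs).
Qed.
End Atoms.

Definition Qs := (rat * rat)%type.
Definition qadd (a b : Qs) : Qs := (a.1 + b.1, a.2 + b.2).
Definition qmul (a b : Qs) : Qs := (a.1 * b.1 + 2%:R * (a.2 * b.2), a.1 * b.2 + a.2 * b.1).
Definition cm := nat -> nat -> Qs.
Definition cadd (p q : cm) : cm := fun a b => qadd (p a b) (q a b).
Definition cmul (p q : cm) : cm := fun a b =>
  qadd (qmul (p a 0%N) (q 0%N b)) (qadd (qmul (p a 1%N) (q 1%N b)) (qmul (p a 2%N) (q 2%N b))).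
Definition cid : cm := fun a b => if a == b then (1, 0) else (0, 0).
Definition czero : cm := fun _ _ => (0, 0).
Definition cmeq (p q : cm) : bool :=
  all (fun a => all (fun b => p a b == q a b) (iota 0 3)) (iota 0 3).

Lemma cmeqP p q : cmeq p q -> forall a b : 'I_3, p a b = q a b.
Proof.
move=> h a b; apply/eqP.
have ha : (nat_of_ord a \in iota 0 3) by rewrite mem_iota ltn_ord.
have hb : (nat_of_ord b \in iota 0 3) by rewrite mem_iota ltn_ord.
exact: (allP (allP h _ ha) _ hb).
Qed.

Section Geo.
Variables (K : numFieldType) (s : K).
Hypothesis hs : s * s = 2%:R.

Definition ev (a : Qs) : K := ratr a.1 + ratr a.2 * s.

Lemma ev_add a b : ev (qadd a b) = ev a + ev b.
Proof. rewrite /ev /= !rmorphD /=; ring. Qed.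

Lemma ev_mul a b : ev (qmul a b) = ev a * ev b.
Proof. rewrite /ev /= !rmorphD !rmorphM /= ratr_nat -hs; ring. Qed.

Lemma ev0 : ev (0, 0) = 0.
Proof. by rewrite /ev /= rmorph0 mul0r addr0. Qed.
Lemma ev1 : ev (1, 0) = 1.
Proof. by rewrite /ev /= rmorph1 rmorph0 mul0r addr0. Qed.

Variables (n : nat) (io : 'I_3 -> 'I_n).
Hypothesis ioinj : injective io.

Definition Emb (p : cm) : 'M[K]_n :=
  \sum_(a < 3) \sum_(b < 3) ev (p a b) *: delta_mx (io a) (io b).

Lemma Emb_ext p q : cmeq p q -> Emb p = Emb q.
Proof.
move=> h; apply: eq_bigr => a _; apply: eq_bigr => b _.
by rewrite (cmeqP h).
Qed.

Lemma EmbD p q : Emb (cadd p q) = Emb p + Emb q.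
Proof.
rewrite /Emb -big_split; apply: eq_bigr => a _; rewrite -big_split.
by apply: eq_bigr => b _; rewrite ev_add scalerDl.
Qed.

Lemma Emb0 : Emb czero = 0.
Proof.
by apply: big1 => a _; apply: big1 => b _; rewrite ev0 scale0r.
Qed.

Lemma ev_cmul p q (a d : 'I_3) :
  ev (cmul p q a d) = \sum_(b < 3) ev (p a b) * ev (q b d).
Proof.
rewrite /cmul !ev_add !ev_mul !big_ord_recr big_ord0 /= add0r addrA.
done.
Qed.

Lemma EmbM p q : Emb p *m Emb q = Emb (cmul p q).
Proof.
rewrite /Emb mulmx_suml.
transitivity (\sum_(a < 3) \sum_(d < 3)
   (\sum_(b < 3) ev (p a b) * ev (q b d)) *: delta_mx (io a) (io d)); last first.
  by apply: eq_bigr => a _; apply: eq_bigr => d _; rewrite ev_cmul.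
apply: eq_bigr => a _; rewrite mulmx_suml.
under [RHS]eq_bigr => d _ do rewrite scaler_suml.
rewrite [RHS]exchange_big /=; apply: eq_bigr => b _.
rewrite -scalemxAl mulmx_sumr.
rewrite (bigD1 b) //= [X in _ + X]big1 ?addr0.
  rewrite mulmx_sumr scaler_sumr; apply: eq_bigr => d _.
  by rewrite -scalemxAr mul_delta_mx scalerA.
move=> c cb; rewrite mulmx_sumr big1 // => d _.
by rewrite -scalemxAr mul_delta_mx_0 ?scaler0 // (inj_eq ioinj) eq_sym.
Qed.
End Geo.

Definition vecs : seq (seq Qs) :=
  [:: [:: (0%:Q, 0%:Q); (0%:Q, 0%:Q); (1%:Q, 0%:Q)];
  [:: (0%:Q, 0%:Q); (1%:Q, 0%:Q); (0%:Q, 0%:Q)];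
  [:: (0%:Q, 0%:Q); (1%:Q, 0%:Q); (1%:Q, 0%:Q)];
  [:: (0%:Q, 0%:Q); (1%:Q, 0%:Q); ((-1%:Q), 0%:Q)];
  [:: (0%:Q, 0%:Q); (1%:Q, 0%:Q); (0%:Q, 1%:Q)];
  [:: (0%:Q, 0%:Q); (1%:Q, 0%:Q); (0%:Q, (-1%:Q))];
  [:: (0%:Q, 0%:Q); (0%:Q, 1%:Q); (1%:Q, 0%:Q)];
  [:: (0%:Q, 0%:Q); (0%:Q, 1%:Q); ((-1%:Q), 0%:Q)];
  [:: (1%:Q, 0%:Q); (0%:Q, 0%:Q); (0%:Q, 0%:Q)];
  [:: (1%:Q, 0%:Q); (0%:Q, 0%:Q); (1%:Q, 0%:Q)];
  [:: (1%:Q, 0%:Q); (0%:Q, 0%:Q); ((-1%:Q), 0%:Q)];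
  [:: (1%:Q, 0%:Q); (0%:Q, 0%:Q); (0%:Q, 1%:Q)];
  [:: (1%:Q, 0%:Q); (0%:Q, 0%:Q); (0%:Q, (-1%:Q))];
  [:: (1%:Q, 0%:Q); (1%:Q, 0%:Q); (0%:Q, 0%:Q)];
  [:: (1%:Q, 0%:Q); (1%:Q, 0%:Q); (0%:Q, 1%:Q)];
  [:: (1%:Q, 0%:Q); (1%:Q, 0%:Q); (0%:Q, (-1%:Q))];
  [:: (1%:Q, 0%:Q); ((-1%:Q), 0%:Q); (0%:Q, 0%:Q)];
  [:: (1%:Q, 0%:Q); ((-1%:Q), 0%:Q); (0%:Q, 1%:Q)];
  [:: (1%:Q, 0%:Q); ((-1%:Q), 0%:Q); (0%:Q, (-1%:Q))];
  [:: (1%:Q, 0%:Q); (0%:Q, 1%:Q); (0%:Q, 0%:Q)];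
  [:: (1%:Q, 0%:Q); (0%:Q, 1%:Q); (1%:Q, 0%:Q)];
  [:: (1%:Q, 0%:Q); (0%:Q, 1%:Q); ((-1%:Q), 0%:Q)];
  [:: (1%:Q, 0%:Q); (0%:Q, (-1%:Q)); (0%:Q, 0%:Q)];
  [:: (1%:Q, 0%:Q); (0%:Q, (-1%:Q)); (1%:Q, 0%:Q)];
  [:: (1%:Q, 0%:Q); (0%:Q, (-1%:Q)); ((-1%:Q), 0%:Q)];
  [:: (0%:Q, 1%:Q); (0%:Q, 0%:Q); (1%:Q, 0%:Q)];
  [:: (0%:Q, 1%:Q); (0%:Q, 0%:Q); ((-1%:Q), 0%:Q)];
  [:: (0%:Q, 1%:Q); (1%:Q, 0%:Q); (0%:Q, 0%:Q)];
  [:: (0%:Q, 1%:Q); (1%:Q, 0%:Q); (1%:Q, 0%:Q)];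
  [:: (0%:Q, 1%:Q); (1%:Q, 0%:Q); ((-1%:Q), 0%:Q)];
  [:: (0%:Q, 1%:Q); ((-1%:Q), 0%:Q); (0%:Q, 0%:Q)];
  [:: (0%:Q, 1%:Q); ((-1%:Q), 0%:Q); (1%:Q, 0%:Q)];
  [:: (0%:Q, 1%:Q); ((-1%:Q), 0%:Q); ((-1%:Q), 0%:Q)];
  [:: ((-3%:Q), 0%:Q); (0%:Q, 1%:Q); ((-1%:Q), 0%:Q)];
  [:: (3%:Q, 0%:Q); (0%:Q, 1%:Q); ((-1%:Q), 0%:Q)];
  [:: (3%:Q, 0%:Q); (0%:Q, (-1%:Q)); ((-1%:Q), 0%:Q)];
  [:: ((-3%:Q), 0%:Q); (0%:Q, (-1%:Q)); ((-1%:Q), 0%:Q)];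
  [:: ((-3%:Q), 0%:Q); (1%:Q, 0%:Q); (0%:Q, (-1%:Q))];
  [:: (3%:Q, 0%:Q); (1%:Q, 0%:Q); (0%:Q, (-1%:Q))];
  [:: (3%:Q, 0%:Q); ((-1%:Q), 0%:Q); (0%:Q, (-1%:Q))];
  [:: ((-3%:Q), 0%:Q); ((-1%:Q), 0%:Q); (0%:Q, (-1%:Q))];
  [:: (0%:Q, (-1%:Q)); (3%:Q, 0%:Q); (1%:Q, 0%:Q)];
  [:: (0%:Q, 1%:Q); (3%:Q, 0%:Q); ((-1%:Q), 0%:Q)];
  [:: (0%:Q, 1%:Q); ((-3%:Q), 0%:Q); (1%:Q, 0%:Q)];
  [:: (0%:Q, (-1%:Q)); ((-3%:Q), 0%:Q); ((-1%:Q), 0%:Q)];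
  [:: ((-1%:Q), 0%:Q); (3%:Q, 0%:Q); (0%:Q, (-1%:Q))];
  [:: (1%:Q, 0%:Q); ((-3%:Q), 0%:Q); (0%:Q, (-1%:Q))];
  [:: (1%:Q, 0%:Q); (3%:Q, 0%:Q); (0%:Q, 1%:Q)];
  [:: ((-1%:Q), 0%:Q); ((-3%:Q), 0%:Q); (0%:Q, 1%:Q)];
  [:: (0%:Q, 1%:Q); ((-1%:Q), 0%:Q); ((-3%:Q), 0%:Q)];
  [:: (0%:Q, (-1%:Q)); (1%:Q, 0%:Q); ((-3%:Q), 0%:Q)];
  [:: (1%:Q, 0%:Q); (0%:Q, 1%:Q); ((-3%:Q), 0%:Q)];
  [:: ((-1%:Q), 0%:Q); (0%:Q, (-1%:Q)); ((-3%:Q), 0%:Q)];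
  [:: (0%:Q, (-1%:Q)); ((-1%:Q), 0%:Q); (3%:Q, 0%:Q)];
  [:: (0%:Q, 1%:Q); (1%:Q, 0%:Q); (3%:Q, 0%:Q)];
  [:: ((-1%:Q), 0%:Q); (0%:Q, 1%:Q); (3%:Q, 0%:Q)];
  [:: (1%:Q, 0%:Q); (0%:Q, (-1%:Q)); (3%:Q, 0%:Q)]].

Definition tris : seq (nat * nat * nat) := [:: (0, 1, 8)%N; (0, 13, 16)%N; (0, 19, 30)%N; (0, 22, 27)%N; (1, 9, 10)%N; (1, 11, 26)%N; (1, 12, 25)%N; (2, 3, 8)%N; (2, 29, 31)%N; (3, 28, 32)%N; (4, 7, 8)%N; (4, 21, 33)%N; (4, 23, 34)%N; (5, 6, 8)%N; (5, 20, 35)%N; (5, 24, 36)%N; (6, 15, 37)%N; (6, 17, 38)%N; (7, 14, 39)%N; (7, 18, 40)%N; (9, 21, 24)%N; (10, 20, 23)%N; (11, 29, 41)%N; (11, 32, 42)%N; (12, 28, 43)%N; (12, 31, 44)%N; (13, 17, 18)%N; (14, 15, 16)%N; (14, 26, 45)%N; (15, 25, 46)%N; (17, 26, 47)%N; (18, 25, 48)%N; (19, 31, 49)%N; (19, 32, 50)%N; (20, 30, 51)%N; (21, 30, 52)%N; (22, 28, 53)%N; (22, 29, 54)%N; (23, 27, 55)%N; (24, 27, 56)%N].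

Definition sorder : seq nat := [:: 57; 0; 1; 2; 3; 4; 7; 5; 6; 13; 16; 19; 30; 22; 27; 9; 10; 11; 26; 12; 25; 29; 31; 28; 32; 21; 33; 23; 34; 14; 39; 18; 40; 20; 35; 24; 36; 15; 37; 17; 38; 49; 50; 51; 52; 53; 54; 55; 56; 41; 42; 45; 47; 43; 44; 46; 48]%N.

Definition dotq (v : seq Qs) : rat :=
  (qadd (qmul (nth (0,0) v 0) (nth (0,0) v 0))
   (qadd (qmul (nth (0,0) v 1) (nth (0,0) v 1)) (qmul (nth (0,0) v 2) (nth (0,0) v 2)))).1.

Definition pmat (v : seq Qs) : cm := fun a b =>
  let x := qmul (nth (0,0) v a) (nth (0,0) v b) in
  ((dotq v)^-1 * x.1, (dotq v)^-1 * x.2).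

Definition pv (i : nat) : cm := pmat (nth [::] vecs i).

Definition chk_tri (t : nat * nat * nat) : bool :=
  let: (u, v, w) := t in
  [&& (u < 57)%N, (v < 57)%N, (w < 57)%N,
      cmeq (cmul (pv u) (pv u)) (pv u), cmeq (cmul (pv v) (pv v)) (pv v),
      cmeq (cmul (pv w) (pv w)) (pv w),
      cmeq (cmul (pv u) (pv v)) czero, cmeq (cmul (pv v) (pv u)) czero,
      cmeq (cmul (pv u) (pv w)) czero, cmeq (cmul (pv w) (pv u)) czero,
      cmeq (cmul (pv v) (pv w)) czero, cmeq (cmul (pv w) (pv v)) czero &
      cmeq (cadd (pv u) (cadd (pv v) (pv w))) cid].

Lemma all_tri : all chk_tri tris.
Proof. vm_compute. reflexivity. Qed.

Definition c00 : cm := fun a b => if (a == 0%N) && (b == 0%N) then (1, 0) else (0, 0).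
Lemma pv8 : cmeq (pv 8) c00.
Proof. vm_compute. reflexivity. Qed.

Definition cls : seq (seq nat) := map (fun t => [:: t.1.1; t.1.2; t.2; 57%N]) tris.

Lemma cls_bound : all (all (fun i => (i < 58)%N)) cls.
Proof. vm_compute. reflexivity. Qed.
Lemma cls_uniq : all uniq cls.
Proof. vm_compute. reflexivity. Qed.
Lemma search_ok : search cls sorder (upd (fun _ => None) 8 true).
Proof. vm_compute. reflexivity. Qed.


Section Main.
Variable F : functor_Ring_CommRing.
Variable theta : forall A : comPzRingType, {rmorphism A -> F A}.
Hypothesis thnat : forall (A B : comPzRingType) (f : {rmorphism A -> B}) x,
  Fmor F f (theta A x) = theta B (f x).

Local Notation ee := (ee theta).

Lemma ee0 (M : pzRingType) : ee (0 : M) = 0.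
Proof.
have h : orth3 (0 : M) 0 0 by split; rewrite ?mulr0.
have := ee_orth thnat (fam_of h) (i:=0) (j:=1) isT isT isT.
by rewrite /= ee_idem.
Qed.

Lemma ee1 (M : pzRingType) : ee (1 : M) = 1.
Proof.
have h : orth3 (1 : M) 0 0 by split; rewrite ?mulr0 ?mul0r ?mulr1.
have := ee_sum thnat (fam_of h); rewrite /= !addr0 subrr !ee0 !addr0 //.
Qed.

Lemma ee_add (M : pzRingType) (A B : M) : A * A = A -> B * B = B -> A * B = 0 ->
  B * A = 0 -> ee (A + B) = ee A + ee B.
Proof.
move=> hA hB hAB hBA.
have h1 : orth3 A B 0 by split; rewrite ?mulr0 ?mul0r.
have h2 : orth3 (A + B) 0 0.
  by split; rewrite ?mulr0 ?mul0r // mulrDl !mulrDr hA hB hAB hBA addr0 add0r.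
have e1 := ee_sum thnat (fam_of h1); have e2 := ee_sum thnat (fam_of h2).
move: e1 e2 => /= e1 e2; rewrite !ee0 !addr0 in e1 e2.
by apply: (addIr (ee (1 - (A + B)))); rewrite e2 e1.
Qed.

Variables (K : numFieldType) (s : K).
Hypothesis hs : s * s = 2%:R.
Variables (n : nat) (io : 'I_3 -> 'I_n).
Hypothesis ioinj : injective io.

Local Notation E := (Emb s io).

Lemma EM p q : E p * E q = E (cmul p q).
Proof. by rewrite -(EmbM hs ioinj) mulmxE. Qed.

Lemma tri_ok u v w : chk_tri (u, v, w) ->
  orth3 (E (pv u)) (E (pv v)) (E (pv w)) /\
  E cid = E (pv u) + E (pv v) + E (pv w).
Proof.
case/and4P => _ _ _ /and5P [h1 h2 h3 h4 /and5P [h5 h6 h7 h8 /andP [h9 h10]]].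
rewrite /orth3 !EM !(Emb_ext s io h1) !(Emb_ext s io h2) !(Emb_ext s io h3).
rewrite !(Emb_ext s io h4) !(Emb_ext s io h5) !(Emb_ext s io h6).
rewrite !(Emb_ext s io h7) !(Emb_ext s io h8) !(Emb_ext s io h9) !Emb0.
split => //.
by rewrite -(Emb_ext s io h10) !EmbD addrA.
Qed.

Definition Mv (i : nat) : 'M[K]_n := if i == 57%N then 1 - E cid else E (pv i).

Lemma ks8 : ee (E (pv 8)) = 0.
Proof.
have := @x_g_zero (F 'M[K]_n) 58 (fun i => ee (Mv i)) (fun i => ee_idem theta (Mv i))
  cls _ _ cls_bound cls_uniq 8 sorder isT search_ok.
apply.
  move=> c /mapP [[[u v] w] ht ->] /=.
  have hc := allP all_tri _ ht.
  have [ho hsum] := tri_ok hc.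
  case/and4P: (hc) => hu hv hw _.
  rewrite !big_cons big_nil addr0 /Mv (ltn_eqF hu) (ltn_eqF hv) (ltn_eqF hw) eqxx.
  rewrite hsum !addrA; exact: (ee_sum thnat (fam_of ho)).
move=> c /mapP [[[u v] w] ht ->] i j /=.
have hc := allP all_tri _ ht.
have [ho hsum] := tri_ok hc.
case/and4P: (hc) => hu hv hw _.
set P := P4 (E (pv u)) (E (pv v)) (E (pv w)).
have key : forall a b, (a < 4)%N -> (b < 4)%N -> a != b -> ee (P a) * ee (P b) = 0.
  by move=> a b ha hb hab; apply: (ee_orth thnat (fam_of ho)).
have xu : ee (Mv u) = ee (P 0%N) by rewrite /Mv (ltn_eqF hu).
have xv : ee (Mv v) = ee (P 1%N) by rewrite /Mv (ltn_eqF hv).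
have xw : ee (Mv w) = ee (P 2%N) by rewrite /Mv (ltn_eqF hw).
have xq : ee (Mv 57) = ee (P 3%N) by rewrite /Mv /= hsum.
rewrite !inE => /or4P [] /eqP -> /or4P [] /eqP -> ij; try by rewrite eqxx in ij.
all: by rewrite ?xu ?xv ?xw ?xq key.
Qed.

Lemma E_c00 : E c00 = delta_mx (io ord0) (io ord0).
Proof.
rewrite /Emb (bigD1 ord0) //= (bigD1 ord0) //= big1 ?addr0.
  rewrite big1 ?addr0; first by rewrite /c00 /= ev1 scale1r.
  move=> a a0; apply: big1 => b _; rewrite /c00.
  have -> : (nat_of_ord a == 0%N) = false by apply/negbTE; rewrite -val_eqE in a0.
  by rewrite /= ev0 scale0r.
move=> b b0; rewrite /c00.
have -> : (nat_of_ord b == 0%N) = false by apply/negbTE; rewrite -val_eqE in b0.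
by rewrite andbF ev0 scale0r.
Qed.

Lemma ks_delta : ee (delta_mx (io ord0) (io ord0) : 'M[K]_n) = 0.
Proof. by rewrite -E_c00 -(Emb_ext s io pv8) ks8. Qed.
End Main.

Section Main2.
Variable F : functor_Ring_CommRing.
Variable theta : forall A : comPzRingType, {rmorphism A -> F A}.
Hypothesis thnat : forall (A B : comPzRingType) (f : {rmorphism A -> B}) x,
  Fmor F f (theta A x) = theta B (f x).
Variables (K : numFieldType) (s : K).
Hypothesis hs : s * s = 2%:R.
Local Notation ee := (ee theta).

Lemma ee_delta n (hn : (3 <= n)%N) (k : 'I_n) : ee (delta_mx k k : 'M[K]_n) = 0.
Proof.
have h0 : (0 < n)%N by apply: leq_trans hn.
have h1 : (1 < n)%N by apply: leq_trans hn.
have h2 : (2 < n)%N by [].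
pose a : 'I_n := if nat_of_ord k == 0%N then Ordinal h1 else Ordinal h0.
pose b : 'I_n := if nat_of_ord k == 2%N then Ordinal h1 else Ordinal h2.
pose io (i : 'I_3) : 'I_n := if nat_of_ord i == 0%N then k else if nat_of_ord i == 1%N then a else b.
have ioinj : injective io.
  move=> [i hi] [j hj] /(congr1 val); rewrite /io /a /b /= => e; apply: val_inj => /=.
  move: e; clear io a b; case: k => kk hk /=.
  by case: i hi => [|[|[|i]]] // _; case: j hj => [|[|[|j]]] // _;
    case: kk hk => [|[|[|kk]]].
have := ks_delta thnat hs ioinj.
by rewrite /io /=.
Qed.

Section Diag.
Variable n : nat.
Definition Dm (m : nat) : 'M[K]_n := \sum_(i < n | (i < m)%N) delta_mx i i.

Lemma dd (i j : 'I_n) : (delta_mx i i : 'M[K]_n) * delta_mx j j = if i == j then delta_mx i i else 0.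
Proof. by rewrite -mulmxE mul_delta_mx_cond; case: eqP => [->|]. Qed.

Lemma dD (i : 'I_n) m : (delta_mx i i : 'M[K]_n) * Dm m = if (i < m)%N then delta_mx i i else 0.
Proof.
rewrite /Dm mulr_sumr; case: ifP => him.
  rewrite (bigD1 i) //= dd eqxx big1 ?addr0 // => j /andP [_ ji].
  by rewrite dd eq_sym (negbTE ji).
apply: big1 => j jm; rewrite dd; case: eqP => // ij.
by move: jm; rewrite -ij him.
Qed.

Lemma Dd (i : 'I_n) m : Dm m * (delta_mx i i : 'M[K]_n) = if (i < m)%N then delta_mx i i else 0.
Proof.
rewrite /Dm mulr_suml; case: ifP => him.
  rewrite (bigD1 i) //= dd eqxx big1 ?addr0 // => j /andP [_ ji].
  by rewrite dd (negbTE ji).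
apply: big1 => j jm; rewrite dd; case: eqP => // ij.
by move: jm; rewrite ij him.
Qed.

Lemma DD m : Dm m * Dm m = Dm m.
Proof. by rewrite {1}/Dm mulr_suml; apply: eq_bigr => i im; rewrite dD im. Qed.

Lemma DS m (hm : (m < n)%N) : Dm m.+1 = Dm m + delta_mx (Ordinal hm) (Ordinal hm).
Proof.
rewrite /Dm (bigD1 (Ordinal hm)) //= addrC; congr (_ + _).
apply: eq_bigl => i; rewrite ltnS -val_eqE /= andbC.
by rewrite ltn_neqAle.
Qed.

Lemma D0 : Dm 0 = 0.
Proof. by apply: big1 => i. Qed.

Lemma Dn : Dm n = 1.
Proof.
apply/matrixP => i j; rewrite /Dm summxE !mxE.
rewrite (bigD1 i) //= !mxE eqxx /= big1 ?addr0.
  by rewrite eq_sym.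
by move=> k /andP [_ ki]; rewrite mxE [i == k]eq_sym (negbTE ki).
Qed.
End Diag.

Lemma F_trivial n (hn : (3 <= n)%N) : (1 : F 'M[K]_n) = 0.
Proof.
have step : forall m, (m <= n)%N -> ee (Dm n m) = 0.
  elim=> [|m IH] hm; first by rewrite D0 ee0.
  rewrite (DS hm) ee_add ?IH ?ee_delta ?addr0 ?(ltnW hm) //.
  - exact: DD.
  - by rewrite -mulmxE mul_delta_mx.
  - by rewrite Dd /= ltnn.
  - by rewrite dD /= ltnn.
by rewrite -(ee1 thnat) -(Dn n) step.
Qed.
End Main2.

Definition KK : numClosedFieldType := complex Rdefinitions.R.

Lemma sKK : sqrtC (2%:R : KK) * sqrtC 2%:R = 2%:R.
Proof. by rewrite -expr2 sqrtCK. Qed.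

Theorem corollary4p3 (F : functor_Ring_CommRing) (HF : restr_iso_id F) :
  (forall (R : pzRingType) (phi : {rmorphism CC -> R}) (n : nat), (3 <= n)%N ->
     (1 : F 'M[R]_n) = 0) /\
  ~ faithful F.
Proof.
case: HF => eta [theta [iso hnat]].
have thnat : forall (A B : comPzRingType) (f : {rmorphism A -> B}) x,
    Fmor F f (theta A x) = theta B (f x).
  move=> A B f x; apply: (can_inj (iso B).1).
  by rewrite hnat (iso A).2 (iso B).2.
have triv : forall n, (3 <= n)%N -> (1 : F 'M[KK]_n) = 0.
  by move=> n hn; apply: (F_trivial thnat sKK hn).
split.
  move=> R phi n hn.
  have := rmorph1 (Fmor F (map_mx phi : {rmorphism 'M[KK]_n -> 'M[R]_n})).
  by rewrite (triv n hn) rmorph0 => <-.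
move=> hfaith.
have h0 : (0 < 3)%N by [].
have h1 : (1 < 3)%N by [].
pose d0 : 'M[KK]_3 := delta_mx (Ordinal h0) (Ordinal h0).
pose d1 : 'M[KK]_3 := delta_mx (Ordinal h1) (Ordinal h1).
have o0 : orth3 d0 0 0 by split; rewrite ?mulr0 ?mul0r // -mulmxE mul_delta_mx.
have o1 : orth3 d1 0 0 by split; rewrite ?mulr0 ?mul0r // -mulmxE mul_delta_mx.
have all0 : forall y : F 'M[KK]_3, y = 0.
  by move=> y; rewrite -[y]mulr1 (triv 3 isT) mulr0.
have := hfaith _ _ (Hm (fam_of o0)) (Hm (fam_of o1)).
move=> /(_ (fun y => etrans (all0 _) (esym (all0 _)))) /(_ eps1).
rewrite !Hm_P4 /= !mulr0z !addr0 !mulr1z /d0 /d1 => /matrixP /(_ (Ordinal h0) (Ordinal h0)).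
by rewrite !mxE /= => /eqP; rewrite oner_eq0.
Qed.
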